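(* Let $(S,d)$ be a stable metric space. Suppose that for every $r\in L^0_{++}$ there exist $s_r\in L^0_{++}$, a stable metric space $(S_r,d_r)$ (a stable subset of some stable $L^0$-module $E_r$), and a stable function $f_r:S\to S_r$ such that $f_r(S)$ is stable totally bounded and, for all $x,y\in S$, $d_r(f_r(x),f_r(y))\le s_r$ implies $d(x,y)\le r$. Then $S$ is stable totally bounded.
   Context: $L^0$: real measurable functions on a probability space modulo a.e. equality, a.e. order, $L^0_+=\{r\ge0\}$, $L^0_{++}=\{r>0\text{ a.e.}\}$. An $L^0$-module is stable if for each countable measurable partition $(A_k)$ and $(x_k)$ there is a unique $x=\sum_k1_{A_k}x_k$ with $1_{A_k}x=1_{A_k}x_k$; a nonempty subset closed under such concatenations is stable; a map $f$ is stable if $f(\sum_k1_{A_k}x_k)=\sum_k1_{A_k}f(x_k)$. $\mathrm{st}(X)$ is the set of all concatenations of elements of $X$. A subset $N$ of a stable set $S$ is stable finite if $N=\{\sum_k1_{A_k}y_k:y_k\in\mathrm{st}(X_k)\}$ for a countable measurable partition $(A_k)$ and finite nonempty $X_k\subset S$. A stable metric space is a stable set $S$ with a stable map $d:S\times S\to L^0_+$ satisfying $d(x,y)=0\iff x=y$, symmetry, triangle inequality; $B_r(x)=\{y:d(x,y)<r\}$. $S$ is stable totally bounded if for every $r\in L^0_{++}$ there is a stable finite $N\subset S$ with $S=\bigcup_{x\in N}B_r(x)$. *)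

(* Defs.v *)
From Stdlib Require Import Reals List ClassicalEpsilon.
Open Scope R_scope.
Set Implicit Arguments.

Record ProbSpace := {
  Omega : Type;
  meas : (Omega -> Prop) -> Prop;
  prob : (Omega -> Prop) -> R;
  meas_full : meas (fun _ => True);
  meas_compl : forall A, meas A -> meas (fun w => ~ A w);
  meas_cunion : forall A : nat -> Omega -> Prop,
      (forall n, meas (A n)) -> meas (fun w => exists n, A n w);
  prob_nonneg : forall A, meas A -> 0 <= prob A;
  prob_full : prob (fun _ => True) = 1;
  prob_cadd : forall A : nat -> Omega -> Prop,
      (forall n, meas (A n)) ->
      (forall i j w, A i w -> A j w -> i = j) ->
      infinite_sum (fun n => prob (A n)) (prob (fun w => exists n, A n w))
}.

Section L0.
Variable Ps : ProbSpace.
Local Notation Om := (Omega Ps).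

Definition ae (p : Om -> Prop) : Prop :=
  exists N, meas Ps N /\ prob Ps N = 0 /\ forall w, ~ N w -> p w.

(** measurable real functions: representatives of elements of L^0 *)
Definition measurable (f : Om -> R) : Prop :=
  forall a, meas Ps (fun w => f w < a).

Definition L0pp (r : Om -> R) : Prop := measurable r /\ ae (fun w => 0 < r w).

Definition ind (A : Om -> Prop) : Om -> R :=
  fun w => if excluded_middle_informative (A w) then 1 else 0.

(** countable measurable partitions (finite ones allowed via empty pieces) *)
Definition partition (A : nat -> Om -> Prop) : Prop :=
  (forall k, meas Ps (A k)) /\
  (forall w, exists k, A k w) /\
  (forall i j w, A i w -> A j w -> i = j).

(** L^0-modules: scalars are measurable functions, and a.e.-equal scalars act
    identically, i.e. a module over the quotient ring L^0. *)
Record L0Module (E : Type) := {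
  madd : E -> E -> E;
  mzero : E;
  mopp : E -> E;
  smul : (Om -> R) -> E -> E;
  madd_assoc : forall x y z, madd x (madd y z) = madd (madd x y) z;
  madd_comm : forall x y, madd x y = madd y x;
  madd_0 : forall x, madd x mzero = x;
  madd_opp : forall x, madd x (mopp x) = mzero;
  smul_ae : forall a b x, measurable a -> measurable b ->
      ae (fun w => a w = b w) -> smul a x = smul b x;
  smul_1 : forall x, smul (fun _ => 1) x = x;
  smul_mul : forall a b x, measurable a -> measurable b ->
      smul (fun w => a w * b w) x = smul a (smul b x);
  smul_addl : forall a b x, measurable a -> measurable b ->
      smul (fun w => a w + b w) x = madd (smul a x) (smul b x);
  smul_addr : forall a x y, measurable a ->
      smul a (madd x y) = madd (smul a x) (smul a y)
}.

Variables (E : Type) (M : L0Module E).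

(** x = sum_k 1_{A_k} x_k *)
Definition is_concat (A : nat -> Om -> Prop) (xs : nat -> E) (x : E) : Prop :=
  forall k, smul M (ind (A k)) x = smul M (ind (A k)) (xs k).

Definition stable_module : Prop :=
  forall A xs, partition A ->
    exists x, is_concat A xs x /\ forall y, is_concat A xs y -> y = x.

Definition stable_set (S : E -> Prop) : Prop :=
  (exists x, S x) /\
  forall A xs x, partition A -> (forall k, S (xs k)) -> is_concat A xs x -> S x.

Definition st (X : E -> Prop) : E -> Prop :=
  fun x => exists A xs, partition A /\ (forall k, X (xs k)) /\ is_concat A xs x.

Definition stable_finite (S N : E -> Prop) : Prop :=
  exists (A : nat -> Om -> Prop) (X : nat -> list E),
    partition A /\
    (forall k, X k <> nil /\ forall y, In y (X k) -> S y) /\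
    (forall x, N x <-> exists ys, (forall k, st (fun y => In y (X k)) (ys k))
                                  /\ is_concat A ys x).

(** stable metric on S; d returns representatives of elements of L^0 *)
Definition stable_metric (S : E -> Prop) (d : E -> E -> Om -> R) : Prop :=
  stable_set S /\
  (forall x y, S x -> S y -> measurable (d x y) /\ ae (fun w => 0 <= d x y w)) /\
  (forall A xs ys x y, partition A -> (forall k, S (xs k)) -> (forall k, S (ys k)) ->
     is_concat A xs x -> is_concat A ys y ->
     forall k, ae (fun w => A k w -> d x y w = d (xs k) (ys k) w)) /\
  (forall x y, S x -> S y -> (ae (fun w => d x y w = 0) <-> x = y)) /\
  (forall x y, S x -> S y -> ae (fun w => d x y w = d y x w)) /\
  (forall x y z, S x -> S y -> S z ->
     ae (fun w => d x z w <= d x y w + d y z w)).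

Definition ball (S : E -> Prop) (d : E -> E -> Om -> R) (r : Om -> R) (x : E)
  : E -> Prop := fun y => S y /\ ae (fun w => d x y w < r w).

Definition stable_totally_bounded (S : E -> Prop) (d : E -> E -> Om -> R) : Prop :=
  forall r, L0pp r ->
    exists N, (forall x, N x -> S x) /\ stable_finite S N /\
      forall y, S y <-> exists x, N x /\ ball S d r x y.

End L0.

Definition stable_fun (Ps : ProbSpace) (E E' : Type)
  (M : L0Module Ps E) (M' : L0Module Ps E') (S : E -> Prop) (S' : E' -> Prop)
  (f : E -> E') : Prop :=
  (forall x, S x -> S' (f x)) /\
  forall A xs x, partition Ps A -> (forall k, S (xs k)) -> is_concat M A xs x ->
    is_concat M' A (fun k => f (xs k)) (f x).

Definition image (E E' : Type) (f : E -> E') (S : E -> Prop) : E' -> Prop :=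
  fun y => exists x, S x /\ y = f x.

(* Main.v *)
Require Import Defs.
From Stdlib Require Import Reals Lra Lia List Classical ClassicalEpsilon FunctionalExtensionality PropExtensionality.
Open Scope R_scope.

Lemma pred_ext {T : Type} (A B : T -> Prop) : (forall w, A w <-> B w) -> A = B.
Proof. intros H. extensionality w. apply propositional_extensionality. apply H. Qed.

Section P.
Variable Ps : ProbSpace.
Local Notation Om := (Omega Ps).

Lemma meas_ext (A B : Om -> Prop) : (forall w, A w <-> B w) -> meas Ps A -> meas Ps B.
Proof. intros H HA. rewrite <- (pred_ext A B H). exact HA. Qed.

Lemma meas_empty : meas Ps (fun _ => False).
Proof. apply (meas_ext (fun w => ~ True)). { intros; tauto. } apply meas_compl, meas_full. Qed.

Lemma meas_union2 A B : meas Ps A -> meas Ps B -> meas Ps (fun w => A w \/ B w).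
Proof.
  intros HA HB.
  set (C := fun n : nat => match n with 0%nat => A | _ => B end).
  apply (meas_ext (fun w => exists n, C n w)).
  - intros w; split.
    + intros [[|n] Hn]; simpl in Hn; tauto.
    + intros [H|H]; [exists 0%nat | exists 1%nat]; exact H.
  - apply meas_cunion. intros [|n]; simpl; auto.
Qed.

Lemma meas_inter A B : meas Ps A -> meas Ps B -> meas Ps (fun w => A w /\ B w).
Proof.
  intros HA HB. apply (meas_ext (fun w => ~ (~ A w \/ ~ B w))).
  - intros w; split; [intros H; apply not_or_and in H; destruct H as [H1 H2]; split; apply NNPP; auto | tauto].
  - apply meas_compl, meas_union2; apply meas_compl; auto.
Qed.

Lemma sum_const c n : sum_f_R0 (fun _ => c) n = INR (S n) * c.
Proof. induction n; simpl sum_f_R0. simpl; lra. rewrite IHn. rewrite !S_INR. lra. Qed.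

Lemma prob_empty : prob Ps (fun _ => False) = 0.
Proof.
  pose proof (prob_cadd Ps (fun _ => fun _ => False)) as H.
  assert (E : (fun w : Om => exists n : nat, False) = fun _ => False).
  { apply pred_ext. intros w; split; [intros [_ F]; exact F | tauto]. }
  cbv beta in H. rewrite E in H.
  specialize (H (fun _ => meas_empty) (fun i j w F _ => False_ind _ F)).
  set (c := prob Ps (fun _ => False)) in *.
  destruct (Req_dec c 0) as [Hc|Hc]; auto. exfalso.
  destruct (H (Rabs c / 2)) as [N HN]. { pose proof (Rabs_pos_lt c Hc). lra. }
  specialize (HN (S N) (le_S _ _ (le_n N))).
  rewrite sum_const in HN. unfold R_dist in HN.
  replace (INR (S (S N)) * c - c) with (INR (S N) * c) in HN by (rewrite (S_INR (S N)); lra).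
  rewrite Rabs_mult, Rabs_right in HN by (apply Rle_ge, pos_INR).
  pose proof (Rabs_pos_lt c Hc). rewrite S_INR in HN. pose proof (pos_INR N). nra.
Qed.

Lemma prob_add2 A B : meas Ps A -> meas Ps B -> (forall w, A w -> B w -> False) ->
  prob Ps (fun w => A w \/ B w) = prob Ps A + prob Ps B.
Proof.
  intros HA HB Hd.
  set (C := fun n : nat => match n with 0%nat => A | 1%nat => B | _ => fun _ => False end).
  pose proof (prob_cadd Ps C) as H.
  assert (E : (fun w => exists n, C n w) = fun w => A w \/ B w).
  { apply pred_ext. intros w; split.
    - intros [[|[|n]] Hn]; simpl in Hn; tauto.
    - intros [h|h]; [exists 0%nat | exists 1%nat]; exact h. }
  cbv beta in H. rewrite E in H. apply (uniqueness_sum (fun n => prob Ps (C n))).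
  - apply H.
    + intros [|[|n]]; simpl; auto using meas_empty.
    + intros [|[|i]] [|[|j]] w Hi Hj; simpl in *; try tauto; exfalso; eauto.
  - intros eps Heps. exists 1%nat. intros n Hn.
    assert (Hs : sum_f_R0 (fun n => prob Ps (C n)) n = prob Ps A + prob Ps B).
    { induction n. lia. destruct n. simpl. reflexivity.
      change (sum_f_R0 (fun n => prob Ps (C n)) (S n) + prob Ps (C (S (S n))) = prob Ps A + prob Ps B).
      rewrite IHn by lia. simpl C. rewrite prob_empty. lra. }
    rewrite Hs. unfold R_dist. rewrite Rminus_diag, Rabs_R0. exact Heps.
Qed.

Lemma ae_and (P Q : Om -> Prop) : ae Ps P -> ae Ps Q -> ae Ps (fun w => P w /\ Q w).
Proof.
  intros [N1 [m1 [p1 h1]]] [N2 [m2 [p2 h2]]].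
  exists (fun w => N1 w \/ N2 w). split; [apply meas_union2; auto|]. split.
  - assert (mD : meas Ps (fun w => N2 w /\ ~ N1 w)) by (apply meas_inter; auto using meas_compl).
    assert (mI : meas Ps (fun w => N2 w /\ N1 w)) by (apply meas_inter; auto).
    assert (E2 : N2 = fun w => (N2 w /\ ~ N1 w) \/ (N2 w /\ N1 w)).
    { apply pred_ext; intros w; tauto. }
    assert (Hp : prob Ps N2 = prob Ps (fun w => N2 w /\ ~ N1 w) + prob Ps (fun w => N2 w /\ N1 w)).
    { rewrite E2 at 1. apply prob_add2; auto. intros w; tauto. }
    pose proof (prob_nonneg Ps _ mD). pose proof (prob_nonneg Ps _ mI).
    assert (E : (fun w => N1 w \/ N2 w) = fun w => N1 w \/ (N2 w /\ ~ N1 w)).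
    { apply pred_ext; intros w; tauto. }
    rewrite E, prob_add2; auto. lra. intros w; tauto.
  - intros w Hw. split; [apply h1 | apply h2]; tauto.
Qed.

Lemma ae_mono (P Q : Om -> Prop) : (forall w, P w -> Q w) -> ae Ps P -> ae Ps Q.
Proof. intros H [N [m [p h]]]. exists N. auto. Qed.

End P.

Lemma concat_ext {Ps E} (M : L0Module Ps E) A (xs ys : nat -> E) x :
  (forall k, xs k = ys k) -> is_concat M A xs x -> is_concat M A ys x.
Proof. intros H C k. rewrite <- H. apply C. Qed.

Lemma concat_unique {Ps E} (M : L0Module Ps E) A xs x y :
  stable_module M -> Defs.partition Ps A -> is_concat M A xs x -> is_concat M A xs y -> x = y.
Proof.
  intros Hs HA Hx Hy. destruct (Hs A xs HA) as [u [_ Hu]].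
  rewrite (Hu x Hx), (Hu y Hy). reflexivity.
Qed.

Theorem lemma6 (Ps : ProbSpace) (E : Type) (M : L0Module Ps E)
  (S : E -> Prop) (d : E -> E -> Omega Ps -> R) :
  stable_module M ->
  stable_metric M S d ->
  (forall r : Omega Ps -> R, L0pp Ps r ->
     exists (s : Omega Ps -> R) (Er : Type) (Mr : L0Module Ps Er)
            (Sr : Er -> Prop) (dr : Er -> Er -> Omega Ps -> R) (f : E -> Er),
       L0pp Ps s /\ stable_module Mr /\ stable_metric Mr Sr dr /\
       stable_fun M Mr S Sr f /\
       stable_totally_bounded Mr (image f S) dr /\
       (forall x y, S x -> S y ->
          ae Ps (fun w => dr (f x) (f y) w <= s w) ->
          ae Ps (fun w => d x y w <= r w))) ->
  stable_totally_bounded M S d.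
Proof.
  intros hstab hmet H r hr.
  destruct hmet as [[[x0 Sx0] hSst] _].
  assert (hr2 : L0pp Ps (fun w => r w / 2)).
  { destruct hr as [hm hae]. split.
    - intros a. apply (meas_ext Ps (fun w => r w < 2 * a)). { intros w; split; intros; lra. } apply hm.
    - eapply ae_mono; [|exact hae]. intros w Hw; simpl; lra. }
  destruct (H _ hr2) as (s & Er & Mr & Sr & dr & f & hs & hstabr & hmetr & hf & htb & hcomp).
  destruct (htb s hs) as (N' & hN'sub & hN'fin & hN'cov).
  destruct hN'fin as (A & X & hA & hX & hN'eq).
  set (g := fun y => epsilon (inhabits x0) (fun x => S x /\ f x = y)).
  assert (hg : forall y, image f S y -> S (g y) /\ f (g y) = y).
  { intros y [x [Sx ->]]. apply (epsilon_spec (inhabits x0) (fun z => S z /\ f z = f x)). eauto. }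
  assert (hXS : forall k y, In y (map g (X k)) -> S y).
  { intros k y Hy. apply in_map_iff in Hy. destruct Hy as [z [<- Hz]].
    apply hg. apply (proj2 (hX k)). exact Hz. }
  assert (hstS : forall k y, st M (fun y => In y (map g (X k))) y -> S y).
  { intros k y (B & xs & hB & hxs & hc). apply (hSst B xs y hB); eauto. }
  exists (fun x => exists ys, (forall k, st M (fun y => In y (map g (X k))) (ys k)) /\ is_concat M A ys x).
  split; [|split].
  - intros x [ys [hys hc]]. apply (hSst A ys x hA); eauto.
  - exists A, (fun k => map g (X k)). split; [exact hA|]. split; [|intros; tauto].
    intros k. split; [|eauto]. destruct (hX k) as [hne _]. destruct (X k); simpl; congruence.
  - intros z. split; [|intros [x [_ [Sz _]]]; exact Sz].
    intros Sz.
    assert (Iz : image f S (f z)) by (exists z; auto).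
    destruct (proj1 (hN'cov (f z)) Iz) as [n' [Nn' [_ hball]]].
    destruct (proj1 (hN'eq n') Nn') as [ys' [hys' hc']].
    assert (hk : forall k, exists xk, st M (fun y => In y (map g (X k))) xk /\ f xk = ys' k /\ S xk).
    { intros k. destruct (hys' k) as (B & zs & hB & hzs & hcz).
      destruct (hstab B (fun j => g (zs j)) hB) as [xk [hxk _]].
      assert (hS : forall j, S (g (zs j))).
      { intros j. apply hg, (proj2 (hX k)), hzs. }
      assert (Sxk : S xk) by (apply (hSst B _ xk hB hS hxk)).
      exists xk. split; [|split; [|exact Sxk]].
      - exists B, (fun j => g (zs j)). split; [exact hB|]. split; [|exact hxk].
        intros j. apply in_map, hzs.
      - pose proof (proj2 hf B _ xk hB hS hxk) as hfc.
        apply (concat_ext Mr B _ zs) in hfc.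
        + exact (concat_unique Mr B zs _ _ hstabr hB hfc hcz).
        + intros j. apply hg, (proj2 (hX k)), hzs. }
    set (xs := fun k => proj1_sig (constructive_indefinite_description _ (hk k))).
    assert (hxs : forall k, st M (fun y => In y (map g (X k))) (xs k) /\ f (xs k) = ys' k /\ S (xs k)).
    { intros k. exact (proj2_sig (constructive_indefinite_description _ (hk k))). }
    destruct (hstab A xs hA) as [x [hx _]].
    assert (hSxs : forall k, S (xs k)) by (intros k; apply hxs).
    assert (Sx : S x) by (apply (hSst A xs x hA hSxs hx)).
    assert (fx : f x = n').
    { pose proof (proj2 hf A xs x hA hSxs hx) as hfc.
      apply (concat_ext Mr A _ ys') in hfc; [|intros k; apply hxs].
      exact (concat_unique Mr A ys' _ _ hstabr hA hfc hc'). }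
    exists x. split; [exists xs; split; [intros k; apply hxs | exact hx]|].
    split; [exact Sz|].
    assert (h1 : ae Ps (fun w => d x z w <= r w / 2)).
    { apply hcomp; auto. rewrite fx. eapply ae_mono; [|exact hball]. intros w Hw; simpl; lra. }
    eapply ae_mono; [|exact (ae_and Ps _ _ h1 (proj2 hr))]. intros w [Ha Hb]; simpl in *; lra.
Qed.
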